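(* In a PIR scheme for a graph $G=(\mathcal{S},\mathcal{W})$, let $i,j\in[N]$ be two distinct servers that both store the $k$-th file $W_k\in\mathcal{W}$. Then \[ H(A_i)+H(A_j)\ \ge\ H\big(A_i\mid \mathcal{W}\setminus\{W_k\},\mathcal{Q}\big)+H\big(A_j\mid \mathcal{W}\setminus\{W_k\},\mathcal{Q}\big)\ \ge\ L. \]
   Context: Graph-based PIR model (non-colluding servers, 2-replication). A simple graph $G=(\mathcal{S},\mathcal{W})$ has vertex set $\mathcal{S}=\{S_1,\dots,S_N\}$ (servers) and edge set $\mathcal{W}=\{W_1,\dots,W_K\}$ (files); file $W_k$ is identified with the edge $\{S_i,S_j\}$ of the two servers storing it, $W_{S_i}$ denotes the set of files stored on $S_i$. Files are independent, each uniform on $\mathbb{F}_2^L$. A user wants $W_\theta$, $\theta$ uniform on $[K]$ and independent of the files; it generates queries $Q_1,\dots,Q_N$ ($Q_i$ sent to $S_i$), $\mathcal{Q}=\{Q_1,\dots,Q_N\}$, with $I(W_1,\dots,W_K;Q_1,\dots,Q_N)=0$. Server $S_i$ returns $A_i$ with $H(A_i\mid Q_i,W_{S_i})=0$. Reliability: $H(W_\theta\mid A_1,\dots,A_N,Q_1,\dots,Q_N)=0$. Privacy: $H(\theta\mid Q_i,W_{S_i})=\log K$ for every $i$. *)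

(* Defs.v *)
From HB Require Import structures.
From mathcomp Require Import all_boot all_order all_algebra.
From mathcomp Require Import reals exp.
Set Implicit Arguments. Unset Strict Implicit. Unset Printing Implicit Defensive.
Import Order.TTheory GRing.Theory Num.Theory.
Local Open Scope ring_scope.

(* logarithm in base 2 (entropies measured in bits, so H(W_k) = L) *)
Definition log2 (R : realType) (x : R) : R := ln x / ln 2.

Definition is_distr (R : realType) (Omega : finType) (P : Omega -> R) : Prop :=
  (forall w, 0 <= P w) /\ \sum_(w : Omega) P w = 1.

Definition pr (R : realType) (Omega : finType) (P : Omega -> R)
  (T : finType) (X : Omega -> T) (x : T) : R :=
  \sum_(w : Omega | X w == x) P w.

(* Shannon entropy H(X) (in bits); terms with Pr = 0 contribute 0 *)
Definition entropy (R : realType) (Omega : finType) (P : Omega -> R)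
  (T : finType) (X : Omega -> T) : R :=
  - \sum_(x : T) pr P X x * log2 (pr P X x).

Definition pairRV (Omega T U : Type) (X : Omega -> T) (Y : Omega -> U) :
  Omega -> T * U := fun w => (X w, Y w).

Definition centropy (R : realType) (Omega : finType) (P : Omega -> R)
  (T U : finType) (X : Omega -> T) (Y : Omega -> U) : R :=
  entropy P (pairRV X Y) - entropy P Y.

Definition minfo (R : realType) (Omega : finType) (P : Omega -> R)
  (T U : finType) (X : Omega -> T) (Y : Omega -> U) : R :=
  entropy P X + entropy P Y - entropy P (pairRV X Y).

(* A simple graph on servers 'I_N with files 'I_K as edges:
   file k is the 2-subset ends k of servers storing it; distinct files are distinct edges. *)
Definition simple_storage_graph (N K : nat) (ends : 'I_K -> {set 'I_N}) : Prop :=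
  (forall k, #|ends k| = 2) /\ injective ends.

Definition stored (N K : nat) (ends : 'I_K -> {set 'I_N}) (i : 'I_N) : {set 'I_K} :=
  [set k | i \in ends k].

(* The sub-collection (W_k)_{k in S} of the files, encoded as a finite function
   that is None outside S (an injective encoding of the tuple). *)
Definition filesOn (Omega : Type) (K : nat) (F : Type)
  (W : Omega -> {ffun 'I_K -> F}) (S : {set 'I_K}) : Omega -> {ffun 'I_K -> option F} :=
  fun w => [ffun k => if k \in S then Some (W w k) else None].

Definition allRV (Omega : Type) (N : nat) (T : Type) (X : 'I_N -> Omega -> T) :
  Omega -> {ffun 'I_N -> T} := fun w => [ffun i => X i w].

Definition file_type (L : nat) := 'rV['F_2]_L.

Definition is_PIR_scheme (R : realType) (Omega : finType) (P : Omega -> R)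
  (N K L : nat) (ends : 'I_K -> {set 'I_N})
  (QT AT : finType)
  (W : Omega -> {ffun 'I_K -> file_type L})
  (theta : Omega -> 'I_K)
  (Q : 'I_N -> Omega -> QT)
  (A : 'I_N -> Omega -> AT) : Prop :=
  is_distr P /\
      simple_storage_graph ends /\
      (forall k (v : file_type L), pr P (fun w => W w k) v = ((2 ^ L)%:R)^-1) /\
      (forall f : {ffun 'I_K -> file_type L},
          pr P W f = \prod_(k < K) pr P (fun w => W w k) (f k)) /\
      (forall t : 'I_K, pr P theta t = (K%:R)^-1) /\
      minfo P W (pairRV theta (allRV Q)) = 0 /\
      (forall i, centropy P (A i) (pairRV (Q i) (filesOn W (stored ends i))) = 0) /\
      centropy P (fun w => W w (theta w)) (pairRV (allRV A) (allRV Q)) = 0 /\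
      (forall i, centropy P theta (pairRV (Q i) (filesOn W (stored ends i)))
                 = log2 (K%:R)).

(* Main.v *)
Require Import Defs.
From HB Require Import structures.
From mathcomp Require Import all_boot all_order all_algebra.
From mathcomp Require Import reals exp.
From mathcomp Require Import ring lra.
Import Order.TTheory GRing.Theory Num.Theory.
Local Open Scope ring_scope.
Set Implicit Arguments. Unset Strict Implicit. Unset Printing Implicit Defensive.

Lemma ln2_gt0 (R : realType) : 0 < ln (2:R).
Proof. by apply: ln_gt0; rewrite ltr1n. Qed.

Lemma log2M (R : realType) (x y : R) : 0 < x -> 0 < y -> log2 (x * y) = log2 x + log2 y.
Proof. by move=> hx hy; rewrite /log2 lnM ?posrE // mulrDl. Qed.

Lemma log2V (R : realType) (x : R) : 0 < x -> log2 (x^-1) = - log2 x.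
Proof. by move=> hx; rewrite /log2 lnV ?posrE // mulNr. Qed.

Lemma log2_le (R : realType) (x y : R) : 0 < x -> 0 < y -> x <= y -> log2 x <= log2 y.
Proof.
by move=> hx hy hxy; rewrite /log2 ler_pM2r ?invr_gt0 ?ln2_gt0 // ler_ln ?posrE.
Qed.

Lemma log2_1 (R : realType) : log2 (1:R) = 0.
Proof. by rewrite /log2 ln1 mul0r. Qed.

Lemma ln_le_subr1 (R : realType) (x : R) : 0 < x -> ln x <= x - 1.
Proof.
move=> hx; have := @le_ln1Dx R (x - 1).
have -> : 1 + (x - 1) = x by ring.
apply; lra.
Qed.

Lemma log2_subr1 (R : realType) (x : R) : 0 < x -> log2 x <= (x - 1) / ln 2.
Proof.
by move=> hx; rewrite /log2 ler_pM2r ?invr_gt0 ?ln2_gt0 // ln_le_subr1.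
Qed.

Lemma ln_eq_subr1 (R : realType) (x : R) : 0 < x -> x - 1 - ln x = 0 -> x = 1.
Proof.
move=> hx h.
set s := Num.sqrt x.
have s0 : 0 < s by rewrite sqrtr_gt0.
have ss : x = s * s by rewrite -expr2 sqr_sqrtr // ltW.
have hl : ln x = ln s + ln s by rewrite ss lnM ?posrE.
have := ln_le_subr1 s0 => hs.
have e : (s - 1) ^+ 2 = 0.
  apply/eqP; rewrite eq_le sqr_ge0 andbT.
  have : (s - 1) ^+ 2 <= x - 1 - ln x.
    rewrite hl {1}ss; have : (s - 1) ^+ 2 = s * s - 1 - (s - 1) - (s - 1) by ring.
    move=> ->; lra.
  by rewrite h.
move/eqP: e; rewrite sqrf_eq0 subr_eq0 => /eqP s1.
by rewrite ss s1 mulr1.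
Qed.

Lemma regroup (R : realType) (Omega T : finType) (D : Omega -> R) (X : Omega -> T)
  (F : T -> R) :
  \sum_w D w * F (X w) = \sum_x pr D X x * F x.
Proof.
rewrite (partition_big X xpredT) //=; apply: eq_bigr => x _.
by rewrite /pr mulr_suml; apply: eq_big => [w|w /eqP ->] //.
Qed.

Lemma sum_pr (R : realType) (Omega T : finType) (D : Omega -> R) (X : Omega -> T) :
  \sum_x pr D X x = \sum_w D w.
Proof.
by rewrite /pr [RHS](partition_big X xpredT).
Qed.

Lemma pr_ge (R : realType) (Omega T : finType) (D : Omega -> R) (X : Omega -> T) :
  (forall w, 0 <= D w) -> forall w, D w <= pr D X (X w).
Proof.
move=> D0 w; rewrite /pr (bigD1 w) //= lerDl sumr_ge0 // => ? _; exact: D0.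
Qed.

Lemma pr_ge0 (R : realType) (Omega T : finType) (D : Omega -> R) (X : Omega -> T) :
  (forall w, 0 <= D w) -> forall x, 0 <= pr D X x.
Proof. by move=> D0 x; rewrite /pr sumr_ge0. Qed.

Lemma pr_push (R : realType) (Omega T U : finType) (D : Omega -> R) (X : Omega -> T)
  (phi : T -> U) y :
  pr D (fun w => phi (X w)) y = \sum_(x | phi x == y) pr D X x.
Proof.
rewrite /pr (partition_big X (fun x => phi x == y)) //=.
apply: eq_bigr => x hx; apply: eq_bigl => w.
by case: (X w =P x) => [->|]; rewrite ?hx ?andbF.
Qed.

Lemma pr_marg2 (R : realType) (Omega T U : finType) (D : Omega -> R) (X : Omega -> T)
  (Y : Omega -> U) y :
  \sum_x pr D (pairRV X Y) (x, y) = pr D Y y.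
Proof.
rewrite /pr [RHS](partition_big X xpredT) //=; apply: eq_bigr => x _.
by apply: eq_bigl => w; rewrite /pairRV xpair_eqE andbC.
Qed.

Lemma pr_marg1 (R : realType) (Omega T U : finType) (D : Omega -> R) (X : Omega -> T)
  (Y : Omega -> U) x :
  \sum_y pr D (pairRV X Y) (x, y) = pr D X x.
Proof.
rewrite /pr [RHS](partition_big Y xpredT) //=.
Qed.

Lemma sum_pair (R : realType) (T U : finType) (F : T * U -> R) :
  \sum_t F t = \sum_x \sum_y F (x, y).
Proof. by rewrite pair_big; apply: eq_bigr => -[]. Qed.

Lemma entropy_pt (R : realType) (Omega T : finType) (D : Omega -> R) (X : Omega -> T) :
  entropy D X = - \sum_w D w * log2 (pr D X (X w)).
Proof. by rewrite /entropy (regroup D X (fun x => log2 (pr D X x))). Qed.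

Lemma D_cases (R : realType) (Omega : finType) (D : Omega -> R) w :
  (forall w, 0 <= D w) -> D w = 0 \/ 0 < D w.
Proof. by move=> D0; have := D0 w; rewrite le0r => /orP [/eqP ->|]; [left|right]. Qed.

Lemma det_le (R : realType) (Omega T U : finType) (D : Omega -> R)
  (X : Omega -> T) (Y : Omega -> U) :
  (forall w, 0 <= D w) ->
  (forall w w', 0 < D w -> 0 < D w' -> Y w = Y w' -> X w = X w') ->
  entropy D X <= entropy D Y.
Proof.
move=> D0 hdet; rewrite !entropy_pt lerN2; apply: ler_sum => w _.
case: (D_cases w D0) => [->|Dw]; first by rewrite !mul0r.
rewrite ler_wpM2l ?D0 //; apply: log2_le.
- exact: lt_le_trans Dw (pr_ge _ D0 _).
- exact: lt_le_trans Dw (pr_ge _ D0 _).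
rewrite /pr big_mkcond [X in _ <= X]big_mkcond /=; apply: ler_sum => w' _.
case: (Y w' =P Y w) => hY; last by case: ifP => _ //; exact: D0.
case: (X w' =P X w) => hX //.
case: (D_cases w' D0) => [-> //| Dw'].
by case: hX; apply: hdet.
Qed.

Lemma det_eq (R : realType) (Omega T U : finType) (D : Omega -> R)
  (X : Omega -> T) (Y : Omega -> U) :
  (forall w, 0 <= D w) ->
  (forall w w', 0 < D w -> 0 < D w' -> Y w = Y w' -> X w = X w') ->
  (forall w w', 0 < D w -> 0 < D w' -> X w = X w' -> Y w = Y w') ->
  entropy D X = entropy D Y.
Proof. by move=> D0 h1 h2; apply/eqP; rewrite eq_le !det_le. Qed.

Lemma ent_diff_ratio (R : realType) (Omega T U : finType) (D : Omega -> R)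
  (X : Omega -> T) (Y : Omega -> U) (c : Omega -> R) :
  (forall w, 0 <= D w) ->
  (forall w, 0 < D w -> pr D X (X w) = c w * pr D Y (Y w)) ->
  entropy D X - entropy D Y = - \sum_w D w * log2 (c w).
Proof.
move=> D0 hc; rewrite !entropy_pt opprK -sumrN -big_split /= -sumrN.
apply: eq_bigr => w _.
case: (D_cases w D0) => [->|Dw]; first by rewrite !mul0r oppr0 addr0.
have pYp : 0 < pr D Y (Y w) := lt_le_trans Dw (pr_ge _ D0 _).
have pXp : 0 < pr D X (X w) := lt_le_trans Dw (pr_ge _ D0 _).
have cp : 0 < c w by rewrite -(pmulr_lgt0 _ pYp) -hc.
rewrite hc // log2M //; ring.
Qed.

Lemma centropy0_det (R : realType) (Omega T U : finType) (D : Omega -> R)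
  (X : Omega -> T) (Y : Omega -> U) :
  (forall w, 0 <= D w) -> centropy D X Y = 0 ->
  forall w w', 0 < D w -> 0 < D w' -> Y w = Y w' -> X w = X w'.
Proof.
move=> D0 h0.
pose c w := pr D (pairRV X Y) (pairRV X Y w) / pr D Y (Y w).
have pYp w : 0 < D w -> 0 < pr D Y (Y w) by move=> Dw; exact: lt_le_trans Dw (pr_ge _ D0 _).
have pXYp w : 0 < D w -> 0 < pr D (pairRV X Y) (pairRV X Y w).
  by move=> Dw; exact: lt_le_trans Dw (pr_ge _ D0 _).
have le1 w : pr D (pairRV X Y) (pairRV X Y w) <= pr D Y (Y w).
  rewrite /pr big_mkcond [X in _ <= X]big_mkcond /=; apply: ler_sum => v _.
  rewrite /pairRV xpair_eqE; case: (Y v == Y w); rewrite ?andbT ?andbF //.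
  by case: ifP => _ //; exact: D0.
have e := ent_diff_ratio (c := c) D0.
move: h0; rewrite /centropy e; last first.
  by move=> w Dw; rewrite /c mulfVK // gt_eqF // pYp.
move/eqP; rewrite oppr_eq0 => /eqP hs.
have termge w : 0 <= - (D w * log2 (c w)).
  case: (D_cases w D0) => [->|Dw]; first by rewrite mul0r oppr0.
  rewrite oppr_ge0 mulr_ge0_le0 ?D0 //.
  rewrite /log2 pmulr_lle0 ?invr_gt0 ?ln2_gt0 // ln_le0 // /c ler_pdivrMr ?pYp // mul1r.
  exact: le1.
have all0 : forall w, - (D w * log2 (c w)) = 0.
  move=> w; move: hs; move/eqP; rewrite -oppr_eq0 -sumrN => /eqP.
  by move/psumr_eq0P => ->.
have c1 w : 0 < D w -> c w = 1.
  move=> Dw; have := all0 w; move/eqP; rewrite oppr_eq0 mulf_eq0 gt_eqF //=.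
  rewrite /log2 mulf_eq0 invr_eq0 (gt_eqF (ln2_gt0 R)) orbF ln_eq0 ?divr_gt0 ?pXYp ?pYp //.
  by move/eqP.
move=> w w' Dw Dw' hY; apply/eqP/negPn/negP => hX.
have ee := divr1_eq (c1 w Dw).
have : pr D Y (Y w) = pr D (pairRV X Y) (pairRV X Y w) +
   \sum_(v | (Y v == Y w) && ~~ (X v == X w)) D v.
  rewrite /pr (bigID (fun v => X v == X w)) /=; congr (_ + _).
  by apply: eq_bigl => v; rewrite /pairRV xpair_eqE andbC.
rewrite ee => h.
have hz : \sum_(v | (Y v == Y w) && ~~ (X v == X w)) D v = 0.
  by apply: (addrI (pr D Y (Y w))); rewrite addr0 -h.
have : D w' <= \sum_(v | (Y v == Y w) && ~~ (X v == X w)) D v.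
  rewrite (bigD1 w') /=; last by rewrite hY eqxx eq_sym hX.
  by rewrite lerDl sumr_ge0 // => ? _; exact: D0.
by rewrite hz => /(lt_le_trans Dw'); rewrite ltxx.
Qed.

Lemma pr_pos (R : realType) (Omega T : finType) (D : Omega -> R) (X : Omega -> T) :
  (forall w, 0 <= D w) -> forall w, 0 < D w -> 0 < pr D X (X w).
Proof. by move=> D0 w Dw; exact: lt_le_trans Dw (pr_ge _ D0 _). Qed.

Lemma prod_sums (R : realType) (T U : finType) (a : T -> R) (b : U -> R) (c : R) :
  \sum_x \sum_z a x * b z * c = (\sum_x a x) * (\sum_z b z) * c.
Proof.
by rewrite !mulr_suml; apply: eq_bigr => x _; rewrite mulr_sumr mulr_suml.
Qed.

Lemma log2_ratio4 (R : realType) (a b c d : R) : 0 < a -> 0 < b -> 0 < c -> 0 < d ->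
  log2 (a * b / (c * d)) = log2 a + log2 b - log2 c - log2 d.
Proof.
move=> ha hb hc hd.
have hcd : 0 < c * d by apply: mulr_gt0.
have hab : 0 < a * b by apply: mulr_gt0.
rewrite log2M ?invr_gt0 // log2M // invfM log2M ?invr_gt0 // !log2V //.
ring.
Qed.

Lemma cancel_div (R : realType) (x y z : R) : x != 0 -> x * (y / (x * z)) = y / z.
Proof. by move=> nz; rewrite invfM mulrCA (mulrA x) mulfV // mul1r. Qed.

Lemma sum4 (R : realType) (Omega : finType) (a b c d : Omega -> R) :
  \sum_w (a w + b w - c w - d w) =
  \sum_w a w + \sum_w b w - \sum_w c w - \sum_w d w.
Proof. by rewrite !big_split /= !sumrN. Qed.

Lemma ssa (R : realType) (Omega T U V : finType) (D : Omega -> R)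
  (X : Omega -> T) (Z : Omega -> U) (Y : Omega -> V) :
  is_distr D ->
  entropy D (pairRV (pairRV X Z) Y) + entropy D Y <=
  entropy D (pairRV X Y) + entropy D (pairRV Z Y).
Proof.
move=> [D0 D1].
set A := pairRV (pairRV X Z) Y.
pose pA w := pr D A (A w).
pose pXY w := pr D (pairRV X Y) (pairRV X Y w).
pose pZY w := pr D (pairRV Z Y) (pairRV Z Y w).
pose pY w := pr D Y (Y w).
pose r w := pXY w * pZY w / (pA w * pY w).
have claim1 w : D w * log2 (pXY w) + D w * log2 (pZY w) - D w * log2 (pA w)
     - D w * log2 (pY w) <= (D w * r w - D w) / ln 2.
  case: (D_cases w D0) => [->|Dw]; first by rewrite !mul0r subrr mul0r; lra.
  have hA : 0 < pA w by apply: pr_pos.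
  have hXY : 0 < pXY w by apply: pr_pos.
  have hZY : 0 < pZY w by apply: pr_pos.
  have hY : 0 < pY w by apply: pr_pos.
  have hr : 0 < r w by rewrite /r divr_gt0 ?mulr_gt0.
  have -> : D w * log2 (pXY w) + D w * log2 (pZY w) - D w * log2 (pA w)
     - D w * log2 (pY w) = D w * log2 (r w).
    rewrite /r /= (log2_ratio4 hXY hZY hA hY); ring.
  have := log2_subr1 hr => h.
  have : D w * log2 (r w) <= D w * ((r w - 1) / ln 2) by rewrite ler_wpM2l ?D0.
  by move=> /le_trans; apply; rewrite mulrA mulrBr mulr1 le_refl.
have claim2 : \sum_w D w * r w <= 1.
  pose G (t : (T * U) * V) := pr D (pairRV X Y) (t.1.1, t.2) *
      pr D (pairRV Z Y) (t.1.2, t.2) / (pr D A t * pr D Y t.2).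
  have -> : \sum_w D w * r w = \sum_w D w * G (A w) by [].
  rewrite regroup.
  pose h (t : (T * U) * V) := pr D (pairRV X Y) (t.1.1, t.2) *
      pr D (pairRV Z Y) (t.1.2, t.2) * (pr D Y t.2)^-1.
  apply: (@le_trans _ _ (\sum_t h t)).
    apply: ler_sum => t _.
    have [->|nz] := eqVneq (pr D A t) 0.
      by rewrite mul0r /h !mulr_ge0 ?invr_ge0 ?pr_ge0.
    by rewrite /G /h cancel_div.
  rewrite sum_pair (sum_pair (fun a => \sum_y h (a, y))) /=.
  under eq_bigr => x _ do rewrite exchange_big.
  rewrite exchange_big /=.
  under eq_bigr => y _ do rewrite /h /= prod_sums pr_marg2 pr_marg2.
  rewrite -D1 -(sum_pr D Y); apply: ler_sum => y _.
  have [->|nz] := eqVneq (pr D Y y) 0; first by rewrite !mul0r.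
  by rewrite mulfK.
have key : \sum_w (D w * log2 (pXY w) + D w * log2 (pZY w) - D w * log2 (pA w)
     - D w * log2 (pY w)) <= 0.
  apply: (le_trans (ler_sum _ (fun w _ => claim1 w))).
  rewrite -mulr_suml sumrB pmulr_lle0 ?invr_gt0 ?ln2_gt0 // D1 subr_le0.
  exact: claim2.
move: key; rewrite sum4 !entropy_pt.
rewrite /pA /pXY /pZY /pY.
lra.
Qed.

Lemma entropy_fst (R : realType) (Omega T U : finType) (D : Omega -> R)
  (X : Omega -> T) (Y : Omega -> U) :
  entropy D X = - \sum_t pr D (pairRV X Y) t * log2 (pr D X t.1).
Proof.
rewrite entropy_pt; congr (- _).
by rewrite -(regroup D (pairRV X Y) (fun t => log2 (pr D X t.1))).
Qed.

Lemma entropy_snd (R : realType) (Omega T U : finType) (D : Omega -> R)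
  (X : Omega -> T) (Y : Omega -> U) :
  entropy D Y = - \sum_t pr D (pairRV X Y) t * log2 (pr D Y t.2).
Proof.
rewrite entropy_pt; congr (- _).
by rewrite -(regroup D (pairRV X Y) (fun t => log2 (pr D Y t.2))).
Qed.

Lemma pr_le_marg1 (R : realType) (Omega T U : finType) (D : Omega -> R)
  (X : Omega -> T) (Y : Omega -> U) x y :
  (forall w, 0 <= D w) -> pr D (pairRV X Y) (x, y) <= pr D X x.
Proof.
move=> D0; rewrite -(pr_marg1 D X Y x) (bigD1 y) //= lerDl sumr_ge0 // => *.
exact: pr_ge0.
Qed.

Lemma pr_le_marg2 (R : realType) (Omega T U : finType) (D : Omega -> R)
  (X : Omega -> T) (Y : Omega -> U) x y :
  (forall w, 0 <= D w) -> pr D (pairRV X Y) (x, y) <= pr D Y y.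
Proof.
move=> D0; rewrite -(pr_marg2 D X Y y) (bigD1 x) //= lerDl sumr_ge0 // => *.
exact: pr_ge0.
Qed.

Lemma sum_prod_pr (R : realType) (Omega T U : finType) (D : Omega -> R)
  (X : Omega -> T) (Y : Omega -> U) :
  \sum_w D w = 1 -> \sum_(t : T * U) pr D X t.1 * pr D Y t.2 = 1.
Proof.
move=> D1; rewrite sum_pair /=.
under eq_bigr => x _ do rewrite -mulr_sumr.
by rewrite -mulr_suml !sum_pr D1 mulr1.
Qed.

Lemma minfo0_indep (R : realType) (Omega T U : finType) (D : Omega -> R)
  (X : Omega -> T) (Y : Omega -> U) :
  is_distr D -> minfo D X Y = 0 ->
  forall x y, pr D (pairRV X Y) (x, y) = pr D X x * pr D Y y.
Proof.
move=> [D0 D1] hm.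
pose p t := pr D (pairRV X Y) t.
pose q (t : T * U) := pr D X t.1 * pr D Y t.2.
pose r t := q t / p t.
have hm' : \sum_t p t * log2 (r t) = 0.
  move: hm; rewrite /minfo (entropy_fst D X Y) (entropy_snd D X Y) /entropy.
  move=> h.
  have -> : \sum_t p t * log2 (r t) =
    \sum_t pr D (pairRV X Y) t * log2 (pr D X t.1)
    + \sum_t pr D (pairRV X Y) t * log2 (pr D Y t.2)
    - \sum_t pr D (pairRV X Y) t * log2 (pr D (pairRV X Y) t); last by lra.
  rewrite -big_split -sumrB; apply: eq_bigr => -[x y] _ /=.
  rewrite /r /p /q /=.
  have [->|nz] := eqVneq (pr D (pairRV X Y) (x, y)) 0; first by rewrite !mul0r; ring.
  have pp : 0 < pr D (pairRV X Y) (x, y) by rewrite lt_def nz pr_ge0.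
  have px : 0 < pr D X x by apply: lt_le_trans pp (pr_le_marg1 _ _ _ _ D0).
  have py : 0 < pr D Y y by apply: lt_le_trans pp (pr_le_marg2 _ _ _ _ D0).
  rewrite log2M ?invr_gt0 ?mulr_gt0 // log2M // log2V //; ring.
have e0 t : 0 <= p t * (r t - 1 - ln (r t)).
  have [->|nz] := eqVneq (p t) 0; first by rewrite mul0r.
  have pp : 0 < p t by rewrite lt_def nz pr_ge0.
  case: t nz pp => x y nz pp.
  have px : 0 < pr D X x by apply: lt_le_trans pp (pr_le_marg1 _ _ _ _ D0).
  have py : 0 < pr D Y y by apply: lt_le_trans pp (pr_le_marg2 _ _ _ _ D0).
  have rp : 0 < r (x, y) by rewrite /r divr_gt0 // /q mulr_gt0.
  rewrite mulr_ge0 ?pr_ge0 //; have := ln_le_subr1 rp; lra.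
have sq : \sum_t p t * r t <= 1.
  rewrite -(sum_prod_pr X Y D1); apply: ler_sum => t _.
  have [->|nz] := eqVneq (p t) 0; first by rewrite mul0r /q mulr_ge0 ?pr_ge0.
  by rewrite /r mulrC mulfVK.
have sp : \sum_t p t = 1 by rewrite /p sum_pr.
have sl : \sum_t p t * ln (r t) = 0.
  have : \sum_t p t * log2 (r t) = (ln 2)^-1 * \sum_t p t * ln (r t).
    by rewrite mulr_sumr; apply: eq_bigr => t _; rewrite /log2; ring.
  rewrite hm' => /esym /eqP; rewrite mulf_eq0 invr_eq0 (gt_eqF (ln2_gt0 R)) /=.
  by move/eqP.
have se : \sum_t p t * (r t - 1 - ln (r t)) = 0.
  apply/eqP; rewrite eq_le sumr_ge0 ?andbT; last by move=> t _; apply: e0.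
  have -> : \sum_t p t * (r t - 1 - ln (r t)) =
      \sum_t p t * r t - \sum_t p t - \sum_t p t * ln (r t).
    by rewrite -!sumrB; apply: eq_bigr => t _; ring.
  by rewrite sp sl; lra.
have eqt t : p t != 0 -> p t = q t.
  move=> nz; have pp : 0 < p t by rewrite lt_def nz pr_ge0.
  have := @psumr_eq0P _ _ xpredT _ (fun t _ => e0 t) se t isT.
  move/eqP; rewrite mulf_eq0 (negbTE nz) /= => /eqP h.
  case: t nz pp h => x y nz pp h.
  have px : 0 < pr D X x by apply: lt_le_trans pp (pr_le_marg1 _ _ _ _ D0).
  have py : 0 < pr D Y y by apply: lt_le_trans pp (pr_le_marg2 _ _ _ _ D0).
  have rp : 0 < r (x, y) by rewrite /r divr_gt0 // /q mulr_gt0.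
  have := ln_eq_subr1 rp h; rewrite /r => /divr1_eq.
  by move=> ->.
move=> x y.
have [nz|z] := eqVneq (p (x, y)) 0; last by apply: eqt.
have : \sum_(t | p t == 0) q t = 0.
  have := sum_prod_pr X Y D1; rewrite (bigID (fun t => p t == 0)) /=.
  have -> : \sum_(t | p t != 0) q t = 1.
    rewrite -sp [RHS](bigID (fun t => p t == 0)) /=.
    rewrite [X in _ = X + _]big1; last by move=> t /eqP.
    by rewrite add0r; apply: eq_bigr => t nzt; rewrite eqt.
  by move=> hh; lra.
move/psumr_eq0P => h.
rewrite -/(p (x, y)) nz; symmetry.
have := h (fun t _ => mulr_ge0 (pr_ge0 X D0 t.1) (pr_ge0 Y D0 t.2)) (x, y) (introT eqP nz).
by [].
Qed.

Lemma pr_supp_ext (R : realType) (Omega T U : finType) (D : Omega -> R)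
  (X : Omega -> T) (X' : Omega -> U) x x' :
  (forall w, 0 <= D w) -> (forall w, 0 < D w -> (X w == x) = (X' w == x')) ->
  pr D X x = pr D X' x'.
Proof.
move=> D0 h; rewrite /pr big_mkcond [RHS]big_mkcond; apply: eq_bigr => w _.
case: (D_cases w D0) => [->|Dw]; first by rewrite !if_same.
by rewrite h.
Qed.

Lemma pr_pair_push1 (R : realType) (Omega T U V : finType) (D : Omega -> R)
  (X : Omega -> T) (Y : Omega -> U) (phi : T -> V) u y :
  pr D (pairRV (fun w => phi (X w)) Y) (u, y) =
  \sum_(x | phi x == u) pr D (pairRV X Y) (x, y).
Proof.
rewrite /pr (partition_big X (fun x => phi x == u)) /=; last first.
  by move=> w; rewrite /pairRV xpair_eqE => /andP [].
apply: eq_bigr => x hx; apply: eq_bigl => w.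
rewrite /pairRV !xpair_eqE; case: (X w =P x) => [->|]; rewrite ?hx ?eqxx ?andbF ?andbT //.
Qed.

Lemma pr_pair_push_mid (R : realType) (Omega T U V Z : finType) (D : Omega -> R)
  (X : Omega -> T) (Y : Omega -> U) (Zr : Omega -> V) (phi : V -> Z) x y z :
  pr D (pairRV X (pairRV Y (fun w => phi (Zr w)))) (x, (y, z)) =
  \sum_(v | phi v == z) pr D (pairRV X (pairRV Y Zr)) (x, (y, v)).
Proof.
rewrite /pr (partition_big Zr (fun v => phi v == z)) /=; last first.
  by move=> w; rewrite /pairRV !xpair_eqE => /and3P [].
apply: eq_bigr => v hv; apply: eq_bigl => w.
rewrite /pairRV !xpair_eqE; case: (Zr w =P v) => [->|]; rewrite ?hv ?eqxx ?andbF ?andbT //.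
Qed.

Lemma marg_in (R : realType) (Omega T U V : finType) (D : Omega -> R)
  (X : Omega -> T) (Y : Omega -> U) (Z : Omega -> V) x y :
  \sum_z pr D (pairRV X (pairRV Y Z)) (x, (y, z)) = pr D (pairRV X Y) (x, y).
Proof.
rewrite /pr [RHS](partition_big Z xpredT) //=; apply: eq_bigr => z _.
apply: eq_bigl => w; rewrite /pairRV !xpair_eqE.
by case: (X w == x); case: (Y w == y); case: (Z w == z).
Qed.

Lemma marg_mid (R : realType) (Omega T U V : finType) (D : Omega -> R)
  (X : Omega -> T) (Y : Omega -> U) (Z : Omega -> V) x z :
  \sum_y pr D (pairRV X (pairRV Y Z)) (x, (y, z)) = pr D (pairRV X Z) (x, z).
Proof.
rewrite /pr [RHS](partition_big Y xpredT) //=; apply: eq_bigr => y _.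
apply: eq_bigl => w; rewrite /pairRV !xpair_eqE.
by case: (X w == x); case: (Y w == y); case: (Z w == z).
Qed.

Lemma pr_swap (R : realType) (Omega T U : finType) (D : Omega -> R)
  (X : Omega -> T) (Y : Omega -> U) x y :
  pr D (pairRV X Y) (x, y) = pr D (pairRV Y X) (y, x).
Proof. by apply: eq_bigl => w; rewrite /pairRV !xpair_eqE andbC. Qed.

Lemma pr_swap3 (R : realType) (Omega T U V : finType) (D : Omega -> R)
  (X : Omega -> T) (Y : Omega -> U) (Z : Omega -> V) x y z :
  pr D (pairRV X (pairRV Y Z)) (x, (y, z)) = pr D (pairRV Y (pairRV X Z)) (y, (x, z)).
Proof.
apply: eq_bigl => w; rewrite /pairRV !xpair_eqE.
by case: (X w == x); case: (Y w == y); case: (Z w == z).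
Qed.

Lemma transfer (R : realType) (Omega : finType) (P E : Omega -> R)
  (N K L : nat) (QT AT : finType)
  (W : Omega -> {ffun 'I_K -> file_type L}) (Q : 'I_N -> Omega -> QT)
  (As : Omega -> AT) (s : 'I_N) (S T : {set 'I_K}) (c0 : R) :
  (forall w, 0 <= P w) -> (forall w, 0 <= E w) -> (forall w, 0 < E w -> 0 < P w) ->
  (forall w w', 0 < P w -> 0 < P w' ->
     pairRV (Q s) (filesOn W S) w = pairRV (Q s) (filesOn W S) w' -> As w = As w') ->
  (forall f qq, pr P (pairRV W (allRV Q)) (f, qq) = c0 * pr P (allRV Q) qq) ->
  (forall f qq, pr E (pairRV W (allRV Q)) (f, qq) = c0 * pr E (allRV Q) qq) ->
  (forall q f, pr P (pairRV (Q s) W) (q, f) = pr E (pairRV (Q s) W) (q, f)) ->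
  centropy P As (pairRV (filesOn W T) (allRV Q)) =
  centropy E As (pairRV (filesOn W T) (allRV Q)).
Proof.
move=> P0 E0 EP detA hP hE hQW.
pose h (qv : QT * {ffun 'I_K -> option (file_type L)}) : option AT :=
  if [pick w | (0 < P w) && (pairRV (Q s) (filesOn W S) w == qv)] is Some w
  then Some (As w) else None.
have hh w : 0 < P w -> h (pairRV (Q s) (filesOn W S) w) = Some (As w).
  move=> Pw; rewrite /h; case: pickP => [w' /andP [Pw' /eqP e]|none].
    by congr Some; apply: detA.
  by have := none w; rewrite Pw eqxx.
pose rS (f : {ffun 'I_K -> file_type L}) : {ffun 'I_K -> option (file_type L)} :=
  [ffun l => if l \in S then Some (f l) else None].
pose rT (f : {ffun 'I_K -> file_type L}) : {ffun 'I_K -> option (file_type L)} :=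
  [ffun l => if l \in T then Some (f l) else None].
pose Nf a g q := \sum_(f | (h (q, rS f) == Some a) && (rT f == g)) (1:R).
pose Mf g := \sum_(f | rT f == g) (1:R).
have Mfp w : 0 < Mf (filesOn W T w).
  rewrite /Mf (bigD1 (W w)) //= ltr_pwDl ?ltr01 ?sumr_ge0 //.
have gen (F : Omega -> R) : (forall w, 0 <= F w) -> (forall w, 0 < F w -> 0 < P w) ->
  (forall f qq, pr F (pairRV W (allRV Q)) (f, qq) = c0 * pr F (allRV Q) qq) ->
  centropy F As (pairRV (filesOn W T) (allRV Q)) =
  - \sum_w F w * log2 (Nf (As w) (filesOn W T w) (Q s w) / Mf (filesOn W T w)).
  move=> F0 FP hF; rewrite /centropy; apply: ent_diff_ratio => // w Fw.
  set a := As w; set g := filesOn W T w; set qq := allRV Q w.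
  have hA : pr F (pairRV As (pairRV (filesOn W T) (allRV Q))) (a, (g, qq)) =
      Nf a g (Q s w) * (c0 * pr F (allRV Q) qq).
    rewrite (@pr_supp_ext _ _ _ _ F _
      (pairRV (fun w' => (h (qq s, rS (W w')) == Some a) && (rT (W w') == g))
              (allRV Q)) _ (true, qq) F0); last first.
      move=> w' Fw'; rewrite /pairRV !xpair_eqE.
      case: (allRV Q w' =P qq) => [e|]; rewrite ?andbF ?andbT //.
      rewrite -e ffunE; have := hh w' (FP w' Fw'); rewrite /pairRV => ->.
      by rewrite eqb_id.
    rewrite (pr_pair_push1 F W (allRV Q) (fun f => (h (qq s, rS f) == Some a) && (rT f == g)) true qq).
    rewrite /Nf mulr_suml; apply: eq_big => [f|f _].
      by rewrite eqb_id /qq /allRV ffunE.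
    by rewrite hF mul1r.
  have hB : pr F (pairRV (filesOn W T) (allRV Q)) (g, qq) = Mf g * (c0 * pr F (allRV Q) qq).
    rewrite (@pr_supp_ext _ _ _ _ F _ (pairRV (fun w' => rT (W w') == g) (allRV Q)) _
      (true, qq) F0); last by move=> w' _; rewrite /pairRV !xpair_eqE eqb_id.
    rewrite (pr_pair_push1 F W (allRV Q) (fun f => rT f == g) true qq) /Mf mulr_suml.
    apply: eq_big => [f|f _]; first by rewrite eqb_id.
    by rewrite hF mul1r.
  have -> : pairRV As (pairRV (filesOn W T) (allRV Q)) w = (a, (g, qq)) by [].
  have -> : pairRV (filesOn W T) (allRV Q) w = (g, qq) by [].
  by rewrite hA hB [RHS]mulrA divfK // gt_eqF // Mfp.
rewrite (gen P P0 (fun w Pw => Pw) hP) (gen E E0 EP hE); congr (- _).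
pose Z w := (As w, (filesOn W T w, Q s w)).
pose Phi (z : AT * ({ffun 'I_K -> option (file_type L)} * QT)) :=
  log2 (Nf z.1 z.2.1 z.2.2 / Mf z.2.1).
have r1 := regroup P Z Phi; have r2 := regroup E Z Phi.
rewrite /Phi /Z /= in r1 r2; rewrite r1 r2.
apply: eq_bigr => z _; congr (_ * _).
pose Gam (t : QT * {ffun 'I_K -> file_type L}) : option (AT * ({ffun 'I_K -> option (file_type L)} * QT)) :=
  if h (t.1, rS t.2) is Some a then Some (a, (rT t.2, t.1)) else None.
have hG (F : Omega -> R) : (forall w, 0 <= F w) -> (forall w, 0 < F w -> 0 < P w) ->
    pr F Z z = \sum_(t | Gam t == Some z) pr F (pairRV (Q s) W) t.
  move=> F0 FP; rewrite -pr_push; apply: pr_supp_ext => // w Fw.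
  rewrite /Gam /=; have := hh w (FP w Fw); rewrite /pairRV => ->.
  by rewrite (inj_eq (@Some_inj _)) /Z.
rewrite (hG P P0 (fun w Pw => Pw)) (hG E E0 EP).
by apply: eq_bigr => -[q f] _; apply: hQW.
Qed.

Lemma ent_const (R : realType) (Omega : finType) (D : Omega -> R) :
  \sum_w D w = 1 -> entropy D (fun _ : Omega => tt) = 0.
Proof.
move=> D1; rewrite entropy_pt.
have -> : pr D (fun _ : Omega => tt) tt = 1 by rewrite /pr -D1; apply: eq_bigl.
under eq_bigr do rewrite log2_1 mulr0.
by rewrite big1 // oppr0.
Qed.

Lemma subadd (R : realType) (Omega T U : finType) (D : Omega -> R)
  (X : Omega -> T) (Y : Omega -> U) :
  is_distr D -> entropy D (pairRV X Y) <= entropy D X + entropy D Y.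
Proof.
move=> [D0 D1]; have := ssa X Y (fun _ => tt) (conj D0 D1).
rewrite ent_const //.
rewrite (@det_eq _ _ _ _ D (pairRV (pairRV X Y) (fun _ => tt)) (pairRV X Y) D0); last 2 first.
- by move=> w w' _ _; rewrite /pairRV => -[-> ->].
- by move=> w w' _ _; rewrite /pairRV => -[-> ->].
rewrite (@det_eq _ _ _ _ D (pairRV X (fun _ => tt)) X D0); last 2 first.
- by move=> w w' _ _; rewrite /pairRV => ->.
- by move=> w w' _ _; rewrite /pairRV => -[->].
rewrite (@det_eq _ _ _ _ D (pairRV Y (fun _ => tt)) Y D0); last 2 first.
- by move=> w w' _ _; rewrite /pairRV => ->.
- by move=> w w' _ _; rewrite /pairRV => -[->].
by rewrite addr0.
Qed.

Lemma two_elems (N : nat) (A : {set 'I_N}) (i j s : 'I_N) :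
  #|A| = 2%N -> i \in A -> j \in A -> i != j -> s \in A -> (s == i) || (s == j).
Proof.
move=> cA iA jA ij sA.
have e : [set i; j] == A.
  rewrite eqEcard cA cards2 ij andbT; apply/subsetP => x.
  by rewrite in_set2 => /orP [] /eqP ->.
by move/eqP: e sA => <-; rewrite in_set2.
Qed.

Lemma count_fibre (R : realType) (K L : nat) (k : 'I_K) (f : {ffun 'I_K -> file_type L}) :
  \sum_(f' : {ffun 'I_K -> file_type L} | [ffun l => if l \in [set~ k] then Some (f' l) else None] ==
             [ffun l => if l \in [set~ k] then Some (f l) else None]) (1:R) = (2 ^ L)%:R.
Proof.
pose upd (v : file_type L) : {ffun 'I_K -> file_type L} :=
  [ffun l => if l == k then v else f l].
have upd_inj : injective upd.
  move=> v1 v2 e; have := congr1 (fun g : {ffun 'I_K -> file_type L} => g k) e.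
  by rewrite /upd !ffunE eqxx.
rewrite (eq_bigl (fun f' => f' \in [set upd v | v in setT])); last first.
  move=> f'; apply/eqP/imsetP => [e|[v _ ->]].
    exists (f' k) => //; apply/ffunP => l; rewrite /upd ffunE.
    case: (l =P k) => [->//|/eqP ne].
    have := congr1 (fun g : {ffun 'I_K -> option (file_type L)} => g l) e.
    by rewrite !ffunE in_setC1 ne => -[].
  apply/ffunP => l; rewrite /upd /= !ffunE in_setC1.
  by case: (l =P k).
by rewrite sumr_const card_imset // cardsT card_mx card_Fp // mul1n.
Qed.

Lemma pr_rot (R : realType) (Omega T U V : finType) (D : Omega -> R)
  (X : Omega -> T) (Y : Omega -> U) (Z : Omega -> V) x y z :
  pr D (pairRV X (pairRV Y Z)) (x, (y, z)) = pr D (pairRV Z (pairRV X Y)) (z, (x, y)).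
Proof.
apply: eq_bigl => w; rewrite /pairRV !xpair_eqE.
by case: (X w == x); case: (Y w == y); case: (Z w == z).
Qed.

Lemma pr_pair_push2 (R : realType) (Omega T U V : finType) (D : Omega -> R)
  (Y : Omega -> U) (X : Omega -> T) (phi : T -> V) y u :
  pr D (pairRV Y (fun w => phi (X w))) (y, u) =
  \sum_(x | phi x == u) pr D (pairRV Y X) (y, x).
Proof.
rewrite pr_swap pr_pair_push1; apply: eq_bigr => x _; exact: pr_swap.
Qed.

Lemma unif_ent (R : realType) (n : nat) : (0 < n)%N ->
  - ((n%:R^-1 * log2 (n%:R^-1 : R)) *+ n) = log2 (n%:R : R).
Proof.
move=> n0.
have nz : (n%:R : R) != 0 by rewrite pnatr_eq0 -lt0n.
by rewrite log2V ?ltr0n // mulrN mulNrn opprK -mulrnAl -mulr_natr mulVf // mul1r.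
Qed.

Unset Implicit Arguments. Set Strict Implicit.

Theorem lemma1 (R : realType) (Omega : finType) (P : Omega -> R)
  (N K L : nat) (ends : 'I_K -> {set 'I_N}) (QT AT : finType)
  (W : Omega -> {ffun 'I_K -> file_type L})
  (theta : Omega -> 'I_K)
  (Q : 'I_N -> Omega -> QT) (A : 'I_N -> Omega -> AT)
  (i j : 'I_N) (k : 'I_K) :
  is_PIR_scheme P ends W theta Q A ->
  i != j -> k \in stored ends i -> k \in stored ends j ->
  let Wk' := filesOn W [set~ k] in
  entropy P (A i) + entropy P (A j)
    >= centropy P (A i) (pairRV Wk' (allRV Q))
       + centropy P (A j) (pairRV Wk' (allRV Q))
  /\ centropy P (A i) (pairRV Wk' (allRV Q))
       + centropy P (A j) (pairRV Wk' (allRV Q)) >= L%:R.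
Proof.
move=> hPIR hij hi hj; cbv zeta.
case: hPIR => PD [[card2 injE] [unifW [indW [unifT [mi [detA [rel priv]]]]]]].
have [P0 P1] := PD.
have K0 : (0 < K)%N by exact: (leq_ltn_trans (leq0n k) (ltn_ord k)).
have Kr0 : (K%:R : R) != 0 by rewrite pnatr_eq0 -lt0n.
set c0 : R := ((2 ^ L)%:R^-1) ^+ K.
have prW f : pr P W f = c0.
  by rewrite indW; under eq_bigr do rewrite unifW; rewrite prodr_const card_ord.
have hWTQ := minfo0_indep PD mi.
have hPQ f qq : pr P (pairRV W (allRV Q)) (f, qq) = c0 * pr P (allRV Q) qq.
  rewrite -(marg_mid P W theta (allRV Q) f qq).
  under eq_bigr do rewrite hWTQ prW.
  by rewrite -mulr_sumr pr_marg2.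
pose D w := K%:R * (P w * (theta w == k)%:R).
have prD (T : finType) (X : Omega -> T) x : pr D X x = K%:R * pr P (pairRV theta X) (k, x).
  rewrite /pr -mulr_sumr; congr (_ * _).
  rewrite big_mkcond [RHS]big_mkcond; apply: eq_bigr => w _.
  rewrite /pairRV xpair_eqE.
  by case: (theta w == k); case: (X w == x); rewrite /= ?mulr1n ?mulr0n ?mulr1 ?mulr0.
have D0 w : 0 <= D w by rewrite /D mulr_ge0 ?ler0n ?mulr_ge0 ?P0.
have DP w : 0 < D w -> 0 < P w /\ theta w = k.
  rewrite /D; case: (theta w =P k) => [e|_] /=; last by rewrite mulr0n mulr0 mulr0 ltxx.
  by rewrite mulr1n mulr1 pmulr_rgt0 ?ltr0n // => ->.
have D1 : \sum_w D w = 1.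
  have -> : \sum_w D w = pr D (fun _ => tt) tt by rewrite /pr; apply: eq_bigl.
  rewrite prD.
  have -> : pr P (pairRV theta (fun _ => tt)) (k, tt) = pr P theta k.
    by apply: eq_bigl => w; rewrite /pairRV xpair_eqE andbT.
  by rewrite unifT mulfV.
have DD : is_distr D := conj D0 D1.
have DP' w : 0 < D w -> 0 < P w := fun h => (DP w h).1.
have hDQ f qq : pr D (pairRV W (allRV Q)) (f, qq) = c0 * pr D (allRV Q) qq.
  by rewrite !prD pr_swap3 hWTQ prW mulrCA.
have Hth : entropy P theta = log2 (K%:R).
  rewrite /entropy; under eq_bigr do rewrite unifT.
  rewrite sumr_const card_ord; exact: unif_ent.
have hQW s q f : pr P (pairRV (Q s) W) (q, f) = pr D (pairRV (Q s) W) (q, f).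
  have mi0 : minfo P theta (pairRV (Q s) (filesOn W (stored ends s))) = 0.
    have := priv s; rewrite /minfo /centropy Hth => h; lra.
  have ind := minfo0_indep PD mi0.
  have hTQ t q' : pr P (pairRV theta (Q s)) (t, q') = pr P theta t * pr P (Q s) q'.
    rewrite -(marg_in P theta (Q s) (filesOn W (stored ends s)) t q').
    under eq_bigr do rewrite ind.
    by rewrite -mulr_sumr pr_marg1.
  have hWTs f' t q' : pr P (pairRV W (pairRV theta (Q s))) (f', (t, q')) =
      c0 * pr P (pairRV theta (Q s)) (t, q').
    have e1 : pr P (pairRV W (pairRV theta (Q s))) (f', (t, q')) =
        pr P (pairRV W (pairRV theta (fun w => allRV Q w s))) (f', (t, q')).
      by apply: eq_bigl => w; rewrite /pairRV /allRV ffunE.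
    rewrite e1 (pr_pair_push_mid P W theta (allRV Q) (fun qq => qq s)).
    under eq_bigr do rewrite hWTQ prW.
    rewrite -mulr_sumr; congr (_ * _).
    rewrite -(pr_pair_push2 P theta (allRV Q) (fun qq => qq s)).
    by apply: eq_bigl => w; rewrite /pairRV /allRV ffunE.
  rewrite prD (pr_rot P theta (Q s) W k q f) hWTs hTQ unifT.
  rewrite pr_swap -(marg_mid P W theta (Q s) f q).
  under eq_bigr do rewrite hWTs.
  rewrite -mulr_sumr pr_marg2.
  rewrite [RHS]mulrCA; congr (_ * _).
  by rewrite mulrA mulfV // mul1r.
have hdet s := centropy0_det P0 (detA s).
have tr s : centropy P (A s) (pairRV (filesOn W [set~ k]) (allRV Q)) =
    centropy D (A s) (pairRV (filesOn W [set~ k]) (allRV Q)).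
  exact: (transfer [set~ k] P0 D0 DP' (hdet s) hPQ hDQ (hQW s)).
split.
  have h1 := subadd (A i) (pairRV (filesOn W [set~ k]) (allRV Q)) PD.
  have h2 := subadd (A j) (pairRV (filesOn W [set~ k]) (allRV Q)) PD.
  rewrite /centropy; lra.
rewrite !tr.
set Y := pairRV (filesOn W [set~ k]) (allRV Q).
have s1 := ssa (A i) (A j) Y DD.
have iE : i \in ends k by move: hi; rewrite inE.
have jE : j \in ends k by move: hj; rewrite inE.
have s2 : entropy D (pairRV W (allRV Q)) <= entropy D (pairRV (pairRV (A i) (A j)) Y).
  apply: det_le D0 _ => w w' Dw Dw'.
  rewrite /Y /pairRV => e; case: e => eAi eAj eW' eQ.
  have [Pw tw] := DP w Dw; have [Pw' tw'] := DP w' Dw'.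
  have eA : allRV A w = allRV A w'.
    apply/ffunP => s; rewrite !ffunE.
    case: (s =P i) => [->//|/eqP si]; case: (s =P j) => [->//|/eqP sj].
    apply: (hdet s w w' Pw Pw').
    rewrite /pairRV; congr (_, _).
      by have := congr1 (fun g : {ffun 'I_N -> QT} => g s) eQ; rewrite !ffunE.
    apply/ffunP => l; rewrite !ffunE; case: ifP => // ls.
    have lk : l != k.
      apply/eqP => lk; move: ls; rewrite lk inE => sE.
      by have := two_elems (card2 k) iE jE hij sE; rewrite (negbTE si) (negbTE sj).
    have := congr1 (fun g : {ffun 'I_K -> option (file_type L)} => g l) eW'.
    by rewrite !ffunE in_setC1 lk => -[->].
  have eWk : W w (theta w) = W w' (theta w').
    by apply: (centropy0_det P0 rel Pw Pw'); rewrite /pairRV eA eQ.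
  rewrite tw tw' in eWk.
  congr (_, _) => //.
  apply/ffunP => l; case: (l =P k) => [->//|/eqP lk].
  have := congr1 (fun g : {ffun 'I_K -> option (file_type L)} => g l) eW'.
  by rewrite !ffunE in_setC1 lk => -[].
have s3 : entropy D (pairRV W (allRV Q)) - entropy D Y = L%:R.
  rewrite (ent_diff_ratio (c := fun _ => ((2 ^ L)%:R)^-1) D0); last first.
    move=> w Dw.
    have -> : pairRV W (allRV Q) w = (W w, allRV Q w) by [].
    have -> : Y w = (filesOn W [set~ k] w, allRV Q w) by [].
    rewrite hDQ.
    have -> : pr D Y (filesOn W [set~ k] w, allRV Q w) =
        (2 ^ L)%:R * (c0 * pr D (allRV Q) (allRV Q w)).
      rewrite (@pr_supp_ext _ _ _ _ D _ (pairRV (fun w' =>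
         [ffun l => if l \in [set~ k] then Some (W w' l) else None] == filesOn W [set~ k] w)
         (allRV Q)) _ (true, allRV Q w) D0); last first.
        by move=> w' _; rewrite /Y /pairRV !xpair_eqE eqb_id.
      rewrite (pr_pair_push1 D W (allRV Q) (fun f =>
         [ffun l => if l \in [set~ k] then Some (f l) else None] == filesOn W [set~ k] w)
         true (allRV Q w)).
      rewrite -(count_fibre R k (W w)) mulr_suml.
      apply: eq_big => [f|f _]; first by rewrite eqb_id.
      by rewrite hDQ mul1r.
    by rewrite mulrA mulVf ?mul1r // pnatr_eq0 expn_eq0.
  rewrite /= -mulr_suml D1 mul1r log2V ?ltr0n ?expn_gt0 // opprK.
  by rewrite /log2 natrX lnXn ?ltr0n // mulrnAl mulfV // gt_eqF // ln2_gt0.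
rewrite /centropy; lra.
Qed.
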